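(* Let $(E,\tau)$ be a locally solid vector lattice, where $\tau$ is an o-Lebesgue topology. The following are equivalent: (1) $C_\tau=E$; (2) $E$ has the countable sup property; (3) every $\tau$-convergent net in $E$ has an embedded sequence that is uo-convergent to the same limit; (4) every increasing $\tau$-convergent net in $E^+$ has an embedded sequence that is uo-convergent to the same limit.
   Context: All vector lattices are real and Archimedean; linear topologies are Hausdorff. A locally solid topology on a vector lattice is a linear topology such that zero has a neighbourhood basis of solid sets. A net $(x_\alpha)$ order converges to $x$ if there is a net $y_\beta\downarrow0$ such that for each $\beta_0$ eventually $|x_\alpha-x|\leq y_{\beta_0}$; it uo-converges to $x$ if $|x_\alpha-x|\wedge|y|$ order converges to $0$ for every $y\in E$. An o-Lebesgue topology is a locally solid topology in which every order convergent net converges topologically to the same limit. A sequence $(V_n)$ of neighbourhoods of zero is normal if $V_{n+1}+V_{n+1}\subseteq V_n$; the carrier $C_\tau$ is the union of the disjoint complements $N^{\mathrm d}$ where $N=\bigcap_nV_n$ ranges over intersections of normal sequences of solid $\tau$-neighbourhoods of zero. $E$ has the countable sup property if every subset with a supremum contains an at most countable subset with the same supremum. Embedded sequence: given a net $(x_\alpha)_{\alpha\in A}$, a sequence $(x_{\alpha_n})_{n\geq1}$ with $\alpha_1\leq\alpha_2\leq\dotsb$, strictly increasing when $A$ has no largest element. *)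

(* Defs.v *)
From HB Require Import structures.
From mathcomp Require Import all_boot all_order all_algebra.
From mathcomp Require Import all_classical all_reals all_analysis.
Set Implicit Arguments. Unset Strict Implicit. Unset Printing Implicit Defensive.
Import Order.TTheory GRing.Theory Num.Theory.
Local Open Scope classical_set_scope.
Local Open Scope ring_scope.

Record vector_lattice (R : realType) (E : lmodType R) := VectorLattice {
  vle : E -> E -> Prop;
  vle_refl : forall x, vle x x;
  vle_trans : forall x y z, vle x y -> vle y z -> vle x z;
  vle_anti : forall x y, vle x y -> vle y x -> x = y;
  vle_add : forall x y z, vle x y -> vle (x + z) (y + z);
  vle_scale : forall (a : R) x y, 0 <= a -> vle x y -> vle (a *: x) (a *: y);
  vsup : E -> E -> E;
  vsup_ub1 : forall x y, vle x (vsup x y);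
  vsup_ub2 : forall x y, vle y (vsup x y);
  vsup_least : forall x y z, vle x z -> vle y z -> vle (vsup x y) z
}.

Section VL.
Context {R : realType} {E : lmodType R} (L : vector_lattice E).

Definition vinf (x y : E) : E := - vsup L (- x) (- y).
Definition vabs (x : E) : E := vsup L x (- x).

Definition archimedean_vl : Prop :=
  forall x y : E, (forall n : nat, vle L (x *+ n) y) -> vle L x 0.

Definition is_sup (S : set E) (s : E) : Prop :=
  (forall x, S x -> vle L x s) /\ (forall z, (forall x, S x -> vle L x z) -> vle L s z).
Definition is_inf (S : set E) (s : E) : Prop :=
  (forall x, S x -> vle L s x) /\ (forall z, (forall x, S x -> vle L z x) -> vle L z s).

Definition solid (A : set E) : Prop :=
  forall x y, A x -> vle L (vabs y) (vabs x) -> A y.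

Definition countable_sup_property : Prop :=
  forall (S : set E) (s : E), is_sup S s ->
    exists C : set E, C `<=` S /\ countable C /\ is_sup C s.

Definition dcompl (N : set E) : set E :=
  [set x | forall y, N y -> vinf (vabs x) (vabs y) = 0].
End VL.

Record dirset (I : Type) := DirSet {
  dle : I -> I -> Prop;
  dle_refl : forall a, dle a a;
  dle_trans : forall a b c, dle a b -> dle b c -> dle a c;
  dle_dir : forall a b, exists c, dle a c /\ dle b c;
  dle_inh : inhabited I
}.

Definition dlt (I : Type) (D : dirset I) (a b : I) : Prop :=
  dle D a b /\ ~ dle D b a.

Lemma nat_dir_refl (a : nat) : (a <= a)%N. Proof. exact: leqnn. Qed.
Lemma nat_dir_trans (a b c : nat) : (a <= b)%N -> (b <= c)%N -> (a <= c)%N.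
Proof. exact: leq_trans. Qed.
Lemma nat_dir_dir (a b : nat) : exists c, (a <= c)%N /\ (b <= c)%N.
Proof. by exists (maxn a b); rewrite leq_maxl leq_maxr. Qed.

Definition natD : dirset nat :=
  @DirSet nat (fun a b => (a <= b)%N) nat_dir_refl nat_dir_trans nat_dir_dir
    (inhabits 0%N).

Section Conv.
Context {R : realType} {E : topologicalLmodType R} (L : vector_lattice E).

Definition tconv (I : Type) (D : dirset I) (x : I -> E) (l : E) : Prop :=
  forall U, nbhs l U -> exists a0, forall a, dle D a0 a -> U (x a).

Definition decr_to0 (J : Type) (DJ : dirset J) (y : J -> E) : Prop :=
  (forall b b', dle DJ b b' -> vle L (y b') (y b)) /\ is_inf L (range y) 0.

Definition oconv (I : Type) (D : dirset I) (x : I -> E) (l : E) : Prop :=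
  exists (J : Type) (DJ : dirset J) (y : J -> E), decr_to0 DJ y /\
    forall b0, exists a0, forall a, dle D a0 a -> vle L (vabs L (x a - l)) (y b0).

Definition uoconv (I : Type) (D : dirset I) (x : I -> E) (l : E) : Prop :=
  forall w : E, oconv D (fun a => vinf L (vabs L (x a - l)) (vabs L w)) 0.

Definition locally_solid : Prop :=
  forall U, nbhs (0 : E) U -> exists V, nbhs (0 : E) V /\ solid L V /\ V `<=` U.

Definition o_lebesgue : Prop :=
  locally_solid /\
  forall (I : Type) (D : dirset I) (x : I -> E) (l : E), oconv D x l -> tconv D x l.

Definition normal_solid_seq (V : nat -> set E) : Prop :=
  forall n, nbhs (0 : E) (V n) /\ solid L (V n) /\
    (forall a b, V n.+1 a -> V n.+1 b -> V n (a + b)).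

Definition carrier : set E :=
  [set x | exists V, normal_solid_seq V /\ dcompl L (\bigcap_n V n) x].

Definition embedded_indices (I : Type) (D : dirset I) (alpha : nat -> I) : Prop :=
  (forall n, dle D (alpha n) (alpha n.+1)) /\
  ((~ exists m, forall b, dle D b m) -> forall n, dlt D (alpha n) (alpha n.+1)).

Definition increasing_pos_net (I : Type) (D : dirset I) (x : I -> E) : Prop :=
  (forall a, vle L 0 (x a)) /\ (forall a b, dle D a b -> vle L (x a) (x b)).
End Conv.

(* Main.v *)
Require Import Defs.
From HB Require Import structures.
From mathcomp Require Import all_boot all_order all_algebra.
From mathcomp Require Import all_classical all_reals all_analysis.
Import Order.TTheory GRing.Theory Num.Theory.
Local Open Scope classical_set_scope.
Local Open Scope ring_scope.

Set Implicit Arguments.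
Section Lat.
Context {R : realType} {E : lmodType R} {L : vector_lattice E}.
Local Notation "x <=: y" := (vle L x y) (at level 70).
Local Notation sup := (vsup L).
Local Notation inf := (vinf L).
Local Notation abs := (vabs L).

Lemma qlrefl x : x <=: x. Proof. exact: vle_refl. Qed.
Lemma qltr {x y z} : x <=: y -> y <=: z -> x <=: z. Proof. exact: vle_trans. Qed.
Lemma qlanti {x y} : x <=: y -> y <=: x -> x = y. Proof. exact: vle_anti. Qed.
Lemma qlD2r {x y z} : x <=: y -> x + z <=: y + z. Proof. exact: vle_add. Qed.
Lemma qlD2l {x y z} : x <=: y -> z + x <=: z + y.
Proof. by move=> h; rewrite ![z + _]addrC; apply: qlD2r. Qed.
Lemma qlD {x y z w} : x <=: y -> z <=: w -> x + z <=: y + w.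
Proof. by move=> h1 h2; apply: (qltr (qlD2r (z:=z) h1)); apply: qlD2l. Qed.
Lemma qlN {x y} : x <=: y -> - y <=: - x.
Proof.
move=> h; have := qlD2r (z:= - x - y) h.
by rewrite addrA subrr add0r addrCA subrr addr0.
Qed.
Lemma qlNK {x y} : - y <=: - x -> x <=: y.
Proof. by move=> /qlN; rewrite !opprK. Qed.
Lemma qlsub0 {x y} : x <=: y -> 0 <=: y - x.
Proof. by move=> /(qlD2r (z:=- x)); rewrite subrr. Qed.
Lemma qlsub0K {x y} : 0 <=: y - x -> x <=: y.
Proof. by move=> /(qlD2r (z:=x)); rewrite add0r subrK. Qed.
Lemma qlsubl {x y z} : x + z <=: y -> x <=: y - z.
Proof. by move=> /(qlD2r (z:=- z)); rewrite addrK. Qed.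
Lemma qlsubr {x y z} : x <=: y - z -> x + z <=: y.
Proof. by move=> /(qlD2r (z:=z)); rewrite subrK. Qed.
Lemma qlsubr' {a b z} : a - z <=: b -> a <=: b + z.
Proof. by move=> /(qlD2r (z:=z)); rewrite subrK. Qed.
Lemma qlsubl' {a b z} : a <=: b + z -> a - z <=: b.
Proof. by move=> /(qlD2r (z:=-z)); rewrite addrK. Qed.
Lemma qlsubDl {x y z} : x <=: y -> z - y <=: z - x.
Proof. by move=> h; apply: qlD2l; apply: qlN. Qed.
Lemma ql0D {x y} : 0 <=: x -> y <=: x + y.
Proof. by move=> h; rewrite -{1}[y]add0r; apply: qlD2r. Qed.
Lemma ql0D' {x y} : 0 <=: x -> y <=: y + x.
Proof. by move=> h; rewrite addrC; apply: ql0D. Qed.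
Lemma qlMn {x y n} : x <=: y -> x *+ n <=: y *+ n.
Proof. move=> h; elim: n => [|n IH]; first by rewrite !mulr0n; apply: qlrefl.
by rewrite !mulrS; apply: qlD. Qed.
Lemma qlhalf {x} : 0 <=: x + x -> 0 <=: x.
Proof.
move=> h; have h2 : (0 : R) <= 2^-1 by rewrite invr_ge0.
have := vle_scale h2 h.
by rewrite scaler0 -mulr2n -[x *+ 2]scaler_nat scalerA mulVf ?pnatr_eq0 // scale1r.
Qed.

Ltac lat := first [exact: vsup_ub1|exact: vsup_ub2|exact: qlrefl].
Lemma qsub1 x y : x <=: sup x y. Proof. exact: vsup_ub1. Qed.
Lemma qsub2 x y : y <=: sup x y. Proof. exact: vsup_ub2. Qed.
Lemma qsul {x y z} : x <=: z -> y <=: z -> sup x y <=: z. Proof. exact: vsup_least. Qed.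
Lemma qsupC x y : sup x y = sup y x.
Proof. by apply: qlanti; apply: qsul; lat. Qed.
Lemma qsup_le {x y x' y'} : x <=: x' -> y <=: y' -> sup x y <=: sup x' y'.
Proof. by move=> h1 h2; apply: qsul; [apply: qltr h1 (qsub1 _ _)|apply: qltr h2 (qsub2 _ _)]. Qed.
Lemma qsup_id {x y} : y <=: x -> sup x y = x.
Proof. by move=> h; apply: qlanti; [apply: qsul => //; apply: qlrefl|apply: qsub1]. Qed.
Lemma qsupDr x y z : sup (x + z) (y + z) = sup x y + z.
Proof.
apply: qlanti.
  by apply: qsul; apply: qlD2r; lat.
apply: qlsubr; apply: qsul; apply: qlsubl; lat.
Qed.

Lemma qinf1 x y : inf x y <=: x.
Proof. by rewrite /vinf; apply: qlNK; rewrite opprK; apply: qsub1. Qed.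
Lemma qinf2 x y : inf x y <=: y.
Proof. by rewrite /vinf; apply: qlNK; rewrite opprK; apply: qsub2. Qed.
Ltac lat2 := first [exact: qinf1|exact: qinf2|exact: qlrefl].
Lemma qinfg {x y z} : z <=: x -> z <=: y -> z <=: inf x y.
Proof.
move=> h1 h2; rewrite /vinf; apply: qlNK; rewrite opprK.
by apply: qsul; apply: qlN.
Qed.
Lemma qinfC x y : inf x y = inf y x.
Proof. by rewrite /vinf qsupC. Qed.
Lemma qinf_le {x y x' y'} : x <=: x' -> y <=: y' -> inf x y <=: inf x' y'.
Proof. by move=> h1 h2; apply: qinfg; [apply: qltr (qinf1 _ _) h1|apply: qltr (qinf2 _ _) h2]. Qed.
Lemma qinf_id {x y} : x <=: y -> inf x y = x.
Proof. by move=> h; apply: qlanti; [apply: qinf1|apply: qinfg => //; apply: qlrefl]. Qed.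
Lemma qinfDr x y z : inf (x + z) (y + z) = inf x y + z.
Proof.
apply: qlanti.
  apply: qlsubr'; apply: qinfg; apply: qlsubl'; lat2.
by apply: qinfg; apply: qlD2r; lat2.
Qed.
Lemma qinfDl x y z : inf (z + x) (z + y) = z + inf x y.
Proof. by rewrite ![z + _]addrC qinfDr. Qed.
Lemma qsup_inf x y : x + y = sup x y + inf x y.
Proof.
rewrite /vinf.
have -> : sup (- x) (- y) = sup x y - (x + y).
  apply: (addIr (x + y)); rewrite subrK -qsupDr.
  by rewrite addKr addrCA addNr addr0 qsupC.
by rewrite opprB addrCA subrr addr0.
Qed.

Lemma qabs1 x : x <=: abs x. Proof. exact: qsub1. Qed.
Lemma qabs2 x : - x <=: abs x. Proof. exact: qsub2. Qed.
Lemma qabsl {x y} : x <=: y -> - x <=: y -> abs x <=: y. Proof. exact: qsul. Qed.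
Lemma qabs_ge0 x : 0 <=: abs x.
Proof.
apply: qlhalf; have := qlD (qabs1 x) (qabs2 x); by rewrite subrr.
Qed.
Lemma qabs_id {x} : 0 <=: x -> abs x = x.
Proof.
move=> h; apply: qlanti; last exact: qabs1.
apply: qabsl; first exact: qlrefl.
by apply: (qltr _ h); rewrite -oppr0; apply: qlN.
Qed.
Lemma qabsN x : abs (- x) = abs x.
Proof. by rewrite /vabs opprK qsupC. Qed.
Lemma qabsB x y : abs (x - y) = abs (y - x).
Proof. by rewrite -qabsN opprB. Qed.
Lemma qabs_abs x : abs (abs x) = abs x.
Proof. exact/qabs_id/qabs_ge0. Qed.
Lemma qabs0 : abs 0 = 0.
Proof. by apply: qabs_id; apply: qlrefl. Qed.
Lemma qabs_tri x y : abs (x + y) <=: abs x + abs y.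
Proof.
apply: qabsl; first by apply: qlD; apply: qabs1.
by rewrite opprD; apply: qlD; apply: qabs2.
Qed.
Lemma qinf_ge0 {x y} : 0 <=: x -> 0 <=: y -> 0 <=: inf x y.
Proof. exact: qinfg. Qed.
Lemma qinf0 {x} : 0 <=: x -> inf 0 x = 0.
Proof. by move=> h; apply: qinf_id. Qed.

Lemma qdisj_add {a b} : inf a b = 0 -> a + b = sup a b.
Proof. by move=> h; rewrite qsup_inf h addr0. Qed.
Lemma qdisj_le {a b y} : inf a b = 0 -> a <=: y -> b <=: y -> a + b <=: y.
Proof. by move=> h h1 h2; rewrite qdisj_add //; apply: qsul. Qed.
Lemma qinf_sub {p q t} : 0 <=: p -> 0 <=: q -> 0 <=: t ->
  inf (p + q) t <=: inf p t + inf q t.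
Proof.
move=> hp hq ht.
have h1 : inf (p + q) t <=: inf p t + q.
  rewrite -qinfDr; apply: qinf_le; first exact: qlrefl.
  exact: ql0D'.
apply: qltr (qinfg h1 (qinf2 _ _)) _.
rewrite -qinfDl; apply: qinf_le; first exact: qlrefl.
by apply: ql0D; apply: qinf_ge0.
Qed.
Lemma qinf_eq0 {a b} : 0 <=: a -> 0 <=: b -> inf a b <=: 0 -> inf a b = 0.
Proof. by move=> ha hb h; apply: qlanti => //; apply: qinf_ge0. Qed.
Lemma qinf_le0 {a b c} : 0 <=: a -> 0 <=: c -> a <=: b -> inf b c = 0 -> inf a c = 0.
Proof.
move=> ha hc hab h; apply: qinf_eq0 => //; rewrite -h.
by apply: qinf_le => //; apply: qlrefl.
Qed.

Definition arch := archimedean_vl L.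
End Lat.


Set Implicit Arguments.
Section Top.
Context {R : realType} {E : topologicalLmodType R} (L : vector_lattice E).
Local Notation "x <=: y" := (vle L x y) (at level 70).
Local Notation sup := (vsup L).
Local Notation inf := (vinf L).
Local Notation abs := (vabs L).

Lemma normal_nbhs {V} : normal_solid_seq L V -> forall n, nbhs (0:E) (V n).
Proof. by move=> h n; case: (h n). Qed.
Lemma normal_solid {V} : normal_solid_seq L V -> forall n, solid L (V n).
Proof. by move=> h n; case: (h n) => _ []. Qed.
Lemma normal_add {V} : normal_solid_seq L V -> forall n a b, V n.+1 a -> V n.+1 b -> V n (a + b).
Proof. by move=> h n; case: (h n) => _ []. Qed.
Lemma normal0 {V} : normal_solid_seq L V -> forall n, V n 0.
Proof. by move=> h n; apply: nbhs_singleton; apply: normal_nbhs. Qed.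
Lemma normal_dec {V} : normal_solid_seq L V -> forall m m', (m <= m')%N -> V m' `<=` V m.
Proof.
move=> h m m' /subnK <-; elim: (m' - m)%N => [|k IH] t //.
rewrite addSn => Vt; apply: IH; rewrite -[t]addr0; apply: normal_add => //.
exact: normal0.
Qed.
Lemma NV_add {V} : normal_solid_seq L V -> forall a b,
  (\bigcap_n V n) a -> (\bigcap_n V n) b -> (\bigcap_n V n) (a + b).
Proof. by move=> h a b Ha Hb n _; apply: normal_add => //; [apply: Ha|apply: Hb]. Qed.
Lemma NV_solid {V} : normal_solid_seq L V -> solid L (\bigcap_n V n).
Proof. by move=> h x y Hx Hy n _; apply: (normal_solid h n) Hy; apply: Hx. Qed.
Lemma NV0 {V} : normal_solid_seq L V -> (\bigcap_n V n) 0.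
Proof. by move=> h n _; apply: normal0. Qed.

Lemma solidI A B : solid L A -> solid L B -> solid L (A `&` B).
Proof. by move=> hA hB x y [Ax Bx] h; split; [apply: hA Ax h|apply: hB Bx h]. Qed.
Lemma solidT : solid L setT. Proof. by []. Qed.

Lemma comb (V : nat -> nat -> set E) (H : nat -> nat -> set E) :
  (forall k, normal_solid_seq L (V k)) ->
  (forall m, H 0%N m = setT) ->
  (forall n m, H n.+1 m = H n m `&` V n m) ->
  [/\ normal_solid_seq L (fun n => H n n),
      (forall n m, nbhs (0:E) (H n m)) &
      (forall t, (forall n, H n n t) -> forall k, (\bigcap_n V k n) t)].
Proof.
move=> hV H0 HS.
have hnb : forall n m, nbhs (0:E) (H n m) /\ solid L (H n m).
  elim=> [|n IH] m; first by rewrite H0; split; [exact: filterT|exact: solidT].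
  rewrite HS; case: (IH m) => h1 h2; split; first exact: filterI h1 (normal_nbhs (hV n) m).
  exact: solidI h2 (normal_solid (hV n) m).
have hadd : forall n m a b, H n m.+1 a -> H n m.+1 b -> H n m (a + b).
  elim=> [|n IH] m a b; first by rewrite !H0.
  rewrite !HS => -[Ha Va] [Hb Vb]; split; first exact: IH.
  exact: normal_add.
have hdec : forall n m, H n.+1 m `<=` H n m by move=> n m t; rewrite HS => -[].
have hin : forall n m t k, H n m t -> (k < n)%N -> V k m t.
  elim=> [|n IH] m t k //; rewrite HS => -[Ht Vt]; rewrite ltnS leq_eqVlt => /orP[/eqP->//|].
  exact: IH.
split.
- move=> n; split; first exact: (hnb n n).1.
  split; first exact: (hnb n n).2.
  by move=> a b Ha Hb; apply: hadd; apply: hdec.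
- by move=> n m; case: (hnb n m).
- move=> t Ht k m _.
  have := hin _ _ _ k (Ht (maxn k m).+1); rewrite ltnS leq_maxl => /(_ isT).
  by move=> h; apply: (normal_dec (hV k) _ _ _ _ h); apply: leq_trans (leq_maxr k m) _.
Qed.

Lemma sum_in (W : nat -> set E) (z : nat -> E) :
  normal_solid_seq L W -> (forall j, W j (z j)) ->
  forall m j, W j (\sum_(i < m) z (j.+1 + i)%N).
Proof.
move=> hW hz; elim=> [|m IH] j; first by rewrite big_ord0; apply: normal0.
rewrite big_ord_recl; apply: normal_add => //; first by rewrite addn0.
have := IH j.+1; congr (W _ _); apply: eq_bigr => i _; congr z.
by rewrite lift0 addnS.
Qed.

Lemma sum_ge0 (z : nat -> E) : (forall j, 0 <=: z j) ->
  forall m, 0 <=: \sum_(i < m) z i.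
Proof.
move=> hz; elim=> [|m IH]; first by rewrite big_ord0; apply: qlrefl.
by rewrite big_ord_recr /=; have := qlD IH (hz m); rewrite addr0.
Qed.
Lemma sum_ge (z : nat -> E) : (forall j, 0 <=: z j) ->
  forall m k, (k < m)%N -> z k <=: \sum_(i < m) z i.
Proof.
move=> hz; elim=> [|m IH] k //; rewrite ltnS leq_eqVlt big_ord_recr /= => /orP[/eqP->|hk].
  by apply: ql0D; apply: sum_ge0.
by apply: qltr (IH _ hk) _; apply: ql0D'.
Qed.

Lemma half_nbhs U : locally_solid L -> nbhs (0:E) U ->
  exists B, [/\ nbhs (0:E) B, solid L B & forall a b, B a -> B b -> U (a + b)].
Proof.
move=> hls hU.
have := @add_continuous E (0, 0) U; rewrite /= addr0 => /(_ hU).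
move=> [[B1 B2]] /= [hB1 hB2] hB.
have [B [hB' [sB sBB]]] := hls _ (filterI hB1 hB2).
exists B; split => // a b Ba Bb.
by apply: (hB (a, b)); split => /=; case: (sBB _ Ba); case: (sBB _ Bb).
Qed.

Lemma tconv_sub I (D : dirset I) x l : tconv D x l ->
  forall U, nbhs (0:E) U -> exists a0, forall a, dle D a0 a -> U (x a - l).
Proof.
move=> h U hU; have [a0 Ha] := h _ (nbhsT_subproof (@add_continuous E) l hU).
by exists a0 => a /Ha [u Uu <-]; rewrite addrC addKr.
Qed.

Lemma small_normal U : locally_solid L -> nbhs (0:E) U ->
  exists V, normal_solid_seq L V /\ V 0%N `<=` U.
Proof.
move=> hls hU.
have hstep : forall A : set E, {B : set E | nbhs (0:E) A ->
    [/\ nbhs (0:E) B, solid L B & forall a b, B a -> B b -> A (a + b)]}.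
  move=> A; case: (pselect (nbhs (0:E) A)) => hA.
    by have /cid [B hB] := half_nbhs A hls hA; exists B.
  by exists setT.
have [V0 [hV0 [sV0 sub0]]] := hls _ hU.
pose V := fix V n := match n with 0%N => V0 | n'.+1 => proj1_sig (hstep (V n')) end.
have hV : forall n, nbhs (0:E) (V n) /\ solid L (V n).
  elim=> [|n [IH1 IH2]]; first by [].
  by case: (proj2_sig (hstep (V n)) IH1).
exists V; split => // n; split; first exact: (hV n).1.
split; first exact: (hV n).2.
by case: (proj2_sig (hstep (V n)) (hV n).1).
Qed.

Lemma haus0 (Hh : hausdorff_space E) r : (forall U, nbhs (0:E) U -> U r) -> r = 0.
Proof.
move=> h; apply/esym/Hh => A B hA hB.
by exists r; split; [exact: h|exact: nbhs_singleton].
Qed.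

Lemma qswap_sub {v s x} : v <=: s - x -> x <=: s - v.
Proof. by move=> /qlsubr h; apply: qlsubl; rewrite addrC. Qed.
Lemma qself_sub {s v} : s <=: s - v -> v <=: 0.
Proof.
move=> /qlsubr h; have := qlD2l (z:=-s) h; by rewrite addKr addNr.
Qed.

Lemma mono_oconv I (D : dirset I) (m : I -> E) s :
  (forall a b, dle D a b -> m a <=: m b) -> is_sup L (range m) s -> oconv L D m s.
Proof.
move=> hm [hub hl]; exists I, D, (fun a => s - m a); split.
  split; first by move=> b b' hb; apply: qlsubDl; exact: hm.
  split; first by move=> _ [a _ <-]; apply: qlsub0; apply: hub; exists a.
  move=> v hv; apply: (@qself_sub s); apply: hl => _ [a _ <-].
  by apply: qswap_sub; apply: hv; exists a.
move=> b0; exists b0 => a hab.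
rewrite qabsB qabs_id; first by apply: qlsubDl; exact: hm.
by apply: qlsub0; apply: hub; exists a.
Qed.

Lemma oconv_neg I (D : dirset I) x l : oconv L D x l -> oconv L D (fun a => l - x a) 0.
Proof.
case=> J [DJ [y [hy h]]]; exists J, DJ, y; split => // b0.
by case: (h b0) => a0 ha; exists a0 => a /ha; rewrite subr0 qabsB.
Qed.

Lemma OD (A : set E) q z : archimedean_vl L -> solid L A ->
  (forall a b, A a -> A b -> A (a + b)) -> A 0 -> 0 <=: q ->
  (forall t, A t -> 0 <=: t -> t <=: q -> t <=: z) ->
  forall a, A a -> inf (q - inf q z) (abs a) = 0.
Proof.
move=> Harch sA aA A0 hq hz a Aa.
set r := q - inf q z.
have hr : 0 <=: r.
  rewrite /r; apply: qlsub0. exact: qinf1.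
set v := inf r (abs a).
have hv0 : 0 <=: v := qinf_ge0 hr (qabs_ge0 _).
have Av : A v by apply: (sA a) => //; rewrite (qabs_id hv0); exact: qinf2.
have hn : forall n, A (v *+ n) /\ v *+ n <=: q.
  elim=> [|n [IH1 IH2]]; first by rewrite mulr0n; split.
  rewrite mulrS addrC; split; first exact: aA.
  have h0 : 0 <=: v *+ n by have := qlMn (n:=n) hv0; rewrite mul0rn.
  have h1 : v *+ n <=: inf q z := qinfg IH2 (hz _ IH1 h0 IH2).
  have -> : q = inf q z + r by rewrite /r addrC subrK.
  exact: qlD h1 (qinf1 r (abs a)).
have : v <=: 0 by apply: Harch => n; exact: (hn n).2.
by move=> h; apply: qlanti h hv0.
Qed.

End Top.


Set Implicit Arguments.
Section Main.
Context {R : realType} {E : topologicalLmodType R} (L : vector_lattice E).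
Local Notation "x <=: y" := (vle L x y) (at level 70).
Local Notation sup := (vsup L).
Local Notation inf := (vinf L).
Local Notation abs := (vabs L).

Lemma updir_trans (P : E -> Prop) (a b c : {t | P t}) :
  proj1_sig a <=: proj1_sig b -> proj1_sig b <=: proj1_sig c -> proj1_sig a <=: proj1_sig c.
Proof. exact: qltr. Qed.

Definition updir (P : E -> Prop) (p0 : {t | P t})
  (hsup : forall a b, P a -> P b -> P (sup a b)) : dirset {t | P t} :=
  @DirSet _ (fun a b => proj1_sig a <=: proj1_sig b) (fun a => qlrefl _) (@updir_trans P)
    (fun a b => ex_intro _ (exist P _ (hsup _ _ (proj2_sig a) (proj2_sig b)))
       (conj (qsub1 _ _) (qsub2 _ _))) (inhabits p0).

Lemma sub_le {x c} : 0 <=: c -> x - c <=: x.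
Proof. by move=> h; have := qlsubDl (z:=x) h; rewrite subr0. Qed.

Lemma band V q : archimedean_vl L -> o_lebesgue L -> normal_solid_seq L V -> 0 <=: q ->
  (forall t, dcompl L (\bigcap_n V n) t -> inf (abs q) (abs t) = 0) ->
  (\bigcap_n V n) q.
Proof.
move=> Harch Hol hV hq hd; set N := \bigcap_n V n.
pose P t := N t /\ 0 <=: t /\ t <=: q.
have P0 : P 0 := conj (NV0 hV) (conj (qlrefl 0) hq).
have Psup : forall a b, P a -> P b -> P (sup a b).
  move=> a b [Na [a0 aq]] [Nb [b0 bq]].
  have hs0 : 0 <=: sup a b := qltr a0 (qsub1 _ _).
  split; last by split=> //; apply: qsul.
  apply: (NV_solid hV (sup a b) (NV_add hV Na Nb)).
  have ab0 : 0 <=: a + b by have := qlD a0 b0; rewrite addr0.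
  rewrite (qabs_id hs0) (qabs_id ab0).
  by apply: qsul; [exact: ql0D' b0|exact: ql0D a0].
pose D := @updir P (exist P 0 P0) Psup.
pose m := fun t : {t | P t} => proj1_sig t.
have hsup : is_sup L (range m) q.
  split; first by move=> _ [t _ <-]; case: (proj2_sig t) => _ [].
  move=> z hz.
  have hz' : forall t, N t -> 0 <=: t -> t <=: q -> t <=: z.
    by move=> t Nt t0 tq; apply: hz; exists (exist P t (conj Nt (conj t0 tq))).
  have z0 : 0 <=: z by apply: hz; exists (exist P 0 P0).
  have hOD := OD q z Harch (NV_solid hV) (NV_add hV) (NV0 hV) hq hz'.
  set r := q - inf q z.
  have r0 : 0 <=: r by rewrite /r; apply: qlsub0; exact: qinf1.
  have rd : dcompl L N r by move=> y Ny; rewrite (qabs_id r0); exact: hOD.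
  have rq : r <=: q by apply: sub_le; apply: qinf_ge0.
  have := hd _ rd; rewrite (qabs_id hq) (qabs_id r0) qinfC (qinf_id rq) => /subr0_eq ->.
  exact: qinf2.
have hoc := oconv_neg (@mono_oconv _ _ L _ D m q (fun a b h => h) hsup).
have htc := Hol.2 _ D _ _ hoc.
move=> n _.
have [a0 Ha] := htc _ (normal_nbhs hV n.+1).
have h1 := Ha a0 (dle_refl D a0).
have h2 : V n.+1 (proj1_sig a0) by case: (proj2_sig a0) => Na _; apply: Na.
by rewrite -(subrK (proj1_sig a0) q); apply: (normal_add hV) h1 h2.
Qed.

Lemma carrier0 : carrier L 0.
Proof.
exists (fun _ => setT); split.
  by move=> n; split; [exact: filterT|split].
by move=> y _; rewrite qabs0 qinf0 //; exact: qabs_ge0.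
Qed.

Lemma carrier_solid : solid L (carrier L).
Proof.
move=> x y [V [hV hx]] hyx; exists V; split => // t Nt.
by apply: (qinf_le0 (qabs_ge0 y) (qabs_ge0 t) hyx); apply: hx.
Qed.

Lemma carrier_add a b : carrier L a -> carrier L b -> carrier L (a + b).
Proof.
move=> [Va [hVa ha]] [Vb [hVb hb]].
exists (fun n => Va n `&` Vb n); split.
  move=> n; split; first exact: filterI (normal_nbhs hVa n) (normal_nbhs hVb n).
  split; first exact: solidI (normal_solid hVa n) (normal_solid hVb n).
  by move=> x y [? ?] [? ?]; split; apply: normal_add.
move=> t Nt.
have Nat : (\bigcap_n Va n) t by move=> n _; case: (Nt n I).
have Nbt : (\bigcap_n Vb n) t by move=> n _; case: (Nt n I).
apply: qinf_eq0; [exact: qabs_ge0|exact: qabs_ge0|].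
apply: qltr (qinf_le (qabs_tri a b) (qlrefl (abs t))) _.
apply: qltr (qinf_sub (qabs_ge0 a) (qabs_ge0 b) (qabs_ge0 t)) _.
by rewrite ha // hb // addr0; apply: qlrefl.
Qed.


Lemma A21 : archimedean_vl L -> o_lebesgue L -> hausdorff_space E ->
  countable_sup_property L -> carrier L = setT.
Proof.
move=> Harch Hol Hh Hcsp; apply/seteqP; split => // x _.
set u := abs x; have u0 : 0 <=: u := qabs_ge0 x.
have hD : is_sup L [set t | carrier L t /\ 0 <=: t /\ t <=: u] u.
  split; first by move=> t [_ [_ ?]].
  move=> z hz.
  have hOD := OD u z Harch carrier_solid carrier_add carrier0 u0
    (fun t Ct t0 tu => hz t (conj Ct (conj t0 tu))).
  set r := u - inf u z.
  have r0 : 0 <=: r by rewrite /r; apply: qlsub0; exact: qinf1.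
  have r_all : forall U, nbhs (0:E) U -> U r.
    move=> U hU; have [V [hV sub]] := small_normal U Hol.1 hU.
    have hb : (\bigcap_n V n) r.
      apply: (@band V r Harch Hol hV r0) => t td; rewrite (qabs_id r0); apply: hOD.
      by exists V.
    exact: sub _ (hb 0%N I).
  by have := haus0 Hh r_all => /subr0_eq ->; exact: qinf2.
have [Cc [Csub [Ccount Csup]]] := Hcsp _ _ hD.
have [f finj] := countable_injP Cc Ccount.
pose e n := xget 0 [set c | Cc c /\ f c = n].
have he : forall c, Cc c -> e (f c) = c.
  move=> c Ccc; rewrite /e; case: xgetP => [y _ [Cy fy]|hno].
    by apply: finj; rewrite ?inE.
  by exfalso; apply: (hno c).
have eC : forall n, carrier L (e n).
  move=> n; rewrite /e; case: xgetP => [y _ [Cy _]|_]; last exact: carrier0.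
  exact: (Csub y Cy).1.
pose V := fun k => proj1_sig (cid (eC k)).
have hV : forall k, normal_solid_seq L (V k) := fun k => (proj2_sig (cid (eC k))).1.
have hVd : forall k, dcompl L (\bigcap_n V k n) (e k) := fun k => (proj2_sig (cid (eC k))).2.
pose H := fix H n := match n with 0%N => fun _ => setT | n'.+1 => fun m => H n' m `&` V n' m end.
have [hW hWn hWN] := comb V H hV (fun m => erefl) (fun n m => erefl).
exists (fun n => H n n); split => // t Nt.
rewrite -/u; set r := inf u (abs t).
have r0 : 0 <=: r := qinf_ge0 u0 (qabs_ge0 t).
have hub : forall c, Cc c -> c <=: u - r.
  move=> c Ccc; have [Ct [c0 cu]] := Csub c Ccc.
  have hct : inf c (abs t) = 0.
    by have := hVd (f c) t (hWN t (fun n => Nt n I) (f c)); rewrite he // (qabs_id c0).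
  have hcr : inf c r = 0.
    rewrite qinfC; apply: (qinf_le0 r0 c0 (qinf2 u (abs t))).
    by rewrite qinfC.
  by apply: qlsubl; apply: (qdisj_le hcr cu (qinf1 u (abs t))).
have := Csup.2 (u - r) hub => /qself_sub h.
exact: qlanti h r0.
Qed.

End Main.


Set Implicit Arguments.
Section C.
Context {R : realType} {E : topologicalLmodType R} (L : vector_lattice E).
Local Notation "x <=: y" := (vle L x y) (at level 70).
Local Notation sup := (vsup L).
Local Notation inf := (vinf L).
Local Notation abs := (vabs L).

Lemma oconv_ext I (D : dirset I) x l x' l' : oconv L D x l ->
  (forall a, x' a - l' = x a - l) -> oconv L D x' l'.
Proof.
case=> J [DJ [y [hy h]]] he; exists J, DJ, y; split => // b0.
by case: (h b0) => a0 ha; exists a0 => a /ha; rewrite he.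
Qed.

Lemma seq_trans (F G H : seq E) : {subset F <= G} -> {subset G <= H} -> {subset F <= H}.
Proof. by move=> h1 h2 a ha; apply: h2; apply: h1. Qed.
Lemma seq_dir (F G : seq E) : exists K : seq E, {subset F <= K} /\ {subset G <= K}.
Proof. by exists (F ++ G); split => a ha; rewrite mem_cat ha ?orbT. Qed.
Definition seqD : dirset (seq E) :=
  @DirSet (seq E) (fun F G : seq E => {subset F <= G}) (fun F a h => h) (@seq_trans) seq_dir
    (inhabits [::]).

Lemma C42 : o_lebesgue L ->
  (forall (I : Type) (D : dirset I) (x : I -> E) (l : E),
      increasing_pos_net L D x -> tconv D x l ->
      exists alpha : nat -> I, embedded_indices D alpha /\ uoconv L natD (x \o alpha) l) ->
  countable_sup_property L.
Proof.
move=> Hol H4 S s hs.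
case: (pselect (exists s0, S s0)) => [[s0 Ss0]|hne]; last first.
  exists set0; split => //; split; first exact: countable0.
  by split => // z _; apply: hs.2 => y Sy; exfalso; apply: hne; exists y.
pose g a := if pselect (S a) then a else s0.
have gS : forall a, S (g a) by move=> a; rewrite /g; case: pselect.
have gid : forall a, S a -> g a = a by move=> a Sa; rewrite /g; case: pselect.
have gle : forall a, g a <=: s := fun a => hs.1 _ (gS a).
pose m (F : seq E) := foldr (fun a acc => sup (g a) acc) s0 F.
have m_s0 : forall F, s0 <=: m F.
  by elim=> [|a F IH] /=; [exact: qlrefl|exact: qltr IH (qsub2 _ _)].
have m_g : forall F a, a \in F -> g a <=: m F.
  elim=> [|b F IH] a //=; rewrite inE => /orP[/eqP->|h]; first exact: qsub1.
  exact: qltr (IH _ h) (qsub2 _ _).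
have m_le : forall F z, s0 <=: z -> (forall a, a \in F -> g a <=: z) -> m F <=: z.
  elim=> [|b F IH] z h0 h //=; apply: qsul; first by apply: h; rewrite mem_head.
  by apply: IH => // a ha; apply: h; rewrite in_cons ha orbT.
have m_mono : forall F G, {subset F <= G} -> m F <=: m G.
  by move=> F G h; apply: m_le (m_s0 G) _ => a ha; apply: m_g; apply: h.
have hsup : is_sup L (range m) s.
  split; first by move=> _ [F _ <-]; apply: m_le (hs.1 _ Ss0) _ => a _; exact: gle.
  move=> z hz; apply: hs.2 => a Sa; rewrite -(gid a Sa).
  by apply: qltr (m_g [:: a] a (mem_head _ _)) _; apply: hz; exists [:: a].
have hoc := @mono_oconv _ _ L _ seqD m s m_mono hsup.
pose x F := m F - s0.
have hoc' : oconv L seqD x (s - s0).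
  by apply: oconv_ext hoc _ => F; rewrite /x opprB addrA subrK.
have htc := Hol.2 _ _ _ _ hoc'.
have hinc : increasing_pos_net L seqD x.
  split; first by move=> F; apply: qlsub0; exact: m_s0.
  by move=> F G h; apply: qlD2r; apply: m_mono.
have [alpha [_ huo]] := H4 _ _ _ _ hinc htc.
have [J [DJ [y [[ydec [ylb yglb]] hev]]]] := huo (s - s0).
pose C := \bigcup_n [set` (s0 :: map g (alpha n))].
exists C; split.
  move=> c [n _]; rewrite /= in_cons => /orP[/eqP->//|/mapP[a _ ->]].
  exact: gS.
split.
  apply: bigcup_countable; first exact: countableP.
  by move=> n _; apply: finite_set_countable; apply: finite_seq.
split.
  move=> c [n _]; rewrite /= in_cons => /orP[/eqP->|/mapP[a _ ->]].
    exact: hs.1.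
  exact: gle.
move=> z hz.
have hmz : forall n, m (alpha n) <=: z.
  move=> n; apply: m_le; first by apply: hz; exists n => //=; rewrite mem_head.
  by move=> a ha; apply: hz; exists n => //=; rewrite in_cons map_f ?orbT.
have ms : forall F, m F <=: s.
  by move=> F; apply: hsup.1; exists F.
set r := sup (s - z) 0.
have r0 : r <=: 0.
  apply: yglb => _ [b _ <-].
  have [n0 hn0] := hev b; have := hn0 n0 (leqnn n0).
  rewrite /= /x subr0.
  have -> : m (alpha n0) - s0 - (s - s0) = m (alpha n0) - s.
    by rewrite opprB addrA subrK.
  rewrite qabsB (qabs_id (qlsub0 (ms _))) (qabs_id (qlsub0 (hs.1 _ Ss0))).
  rewrite (qinf_id (qlsubDl (m_s0 _))) (qabs_id (qlsub0 (ms _))) => h.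
  apply: qltr h; apply: qsul; first exact: qlsubDl.
  exact: qlsub0.
have : s - z <=: 0 := qltr (qsub1 _ _) r0.
by move=> /qlsubr'; rewrite add0r.
Qed.
End C.


Set Implicit Arguments.
Section B.
Context {R : realType} {E : topologicalLmodType R} (L : vector_lattice E).
Local Notation "x <=: y" := (vle L x y) (at level 70).
Local Notation sup := (vsup L).
Local Notation inf := (vinf L).
Local Notation abs := (vabs L).

Lemma downdir_trans (P : E -> Prop) (a b c : {t | P t}) :
  proj1_sig b <=: proj1_sig a -> proj1_sig c <=: proj1_sig b -> proj1_sig c <=: proj1_sig a.
Proof. by move=> h1 h2; exact: qltr h2 h1. Qed.

Definition downdir (P : E -> Prop) (p0 : {t | P t})
  (hinf : forall a b, P a -> P b -> P (inf a b)) : dirset {t | P t} :=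
  @DirSet _ (fun a b => proj1_sig b <=: proj1_sig a) (fun a => qlrefl _) (@downdir_trans P)
    (fun a b => ex_intro _ (exist P _ (hinf _ _ (proj2_sig a) (proj2_sig b)))
       (conj (qinf1 _ _) (qinf2 _ _))) (inhabits p0).

Lemma arch_tail ww c p : archimedean_vl L -> 0 <=: p ->
  (forall j, p <=: ww - c *+ j) -> c <=: 0.
Proof.
move=> Harch p0 h; apply: Harch => j.
by apply: qlsub0K; apply: qltr p0 (h j).
Qed.

Lemma sumS_le (z : nat -> E) : (forall j, 0 <=: z j) ->
  forall m m', (m <= m')%N -> \sum_(i < m) z i <=: \sum_(i < m') z i.
Proof.
move=> hz m m' /subnK <-; elim: (m' - m)%N => [|k IH]; first exact: qlrefl.
by rewrite addSn big_ord_recr /=; apply: qltr IH _; apply: ql0D'.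
Qed.


Lemma step_exists I (D : dirset I) (x : I -> E) l : tconv D x l ->
  forall a U, nbhs (0:E) U -> exists a', [/\ dle D a a',
     ((~ exists m, forall b, dle D b m) -> dlt D a a') &
     forall b, dle D a' b -> U (x b - l)].
Proof.
move=> htc a U hU; have [a0 Ha] := tconv_sub htc U hU.
have [c [hac ha0c]] := dle_dir D a a0.
case: (pselect (exists m, forall b, dle D b m)) => hmax.
  exists c; split; [exact: hac|by move=> /(_ hmax)|].
  by move=> b hb; apply: Ha; exact: dle_trans ha0c hb.
have [b hb] : exists b, ~ dle D b c.
  case: (pselect (exists b, ~ dle D b c)) => // hn; exfalso; apply: hmax.
  by exists c => b; apply: contrapT => hb; apply: hn; exists b.
have [d [hcd hbd]] := dle_dir D c b.
exists d; split.
- exact: dle_trans hac hcd.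
- move=> _; split; first exact: dle_trans hac hcd.
  by move=> hda; apply: hb; exact: dle_trans hbd (dle_trans hda hac).
- by move=> b' hb'; apply: Ha; exact: dle_trans ha0c (dle_trans hcd hb').
Qed.

Lemma B13 : archimedean_vl L -> o_lebesgue L -> carrier L = setT ->
  forall (I : Type) (D : dirset I) (x : I -> E) (l : E),
      tconv D x l ->
      exists alpha : nat -> I, embedded_indices D alpha /\ uoconv L natD (x \o alpha) l.
Proof.
move=> Harch Hol H1 I D x l htc.
have hC : forall a, carrier L (x a - l) by move=> a; rewrite H1.
pose Vof a := proj1_sig (cid (hC a)).
have hV : forall a, normal_solid_seq L (Vof a) := fun a => (proj2_sig (cid (hC a))).1.
have hVd : forall a, dcompl L (\bigcap_n Vof a n) (x a - l) :=
  fun a => (proj2_sig (cid (hC a))).2.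
pose Pst a U a' := [/\ dle D a a',
     ((~ exists m, forall b, dle D b m) -> dlt D a a') &
     forall b, dle D a' b -> U (x b - l)].
pose ch a (U : set E) := if pselect (nbhs (0:E) U) is left hU
  then proj1_sig (cid (step_exists htc a U hU)) else a.
have ch_spec : forall a U, nbhs (0:E) U -> Pst a U (ch a U).
  move=> a U hU; rewrite /ch; case: (pselect (nbhs (0:E) U)) => [hU'|//].
  exact: (proj2_sig (cid (step_exists htc a U hU'))).
case: (dle_inh D) => a0.
pose st := fix st n := match n with
  | 0%N => (a0, fun _ : nat => @setT E)
  | n'.+1 => let p := st n' in
     (ch p.1 (fun y => p.2 n'.+1 y /\ Vof p.1 n'.+1 y), fun m => p.2 m `&` Vof p.1 m)
  end.
pose alpha n := (st n).1.
pose H n := (st n).2.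
have [hW hWn hWN] := comb (fun k => Vof (alpha k)) H (fun k => hV _) (fun m => erefl)
  (fun n m => erefl).
have spec : forall n, Pst (alpha n) (H n.+1 n.+1) (alpha n.+1).
  by move=> n; apply: ch_spec; apply: hWn.
have yW : forall n, H n n (x (alpha n) - l).
  case=> [|n] //; by case: (spec n) => _ _; apply; apply: dle_refl.
exists alpha; split.
  split; first by move=> n; case: (spec n).
  by move=> hm n; case: (spec n) => _ /(_ hm).
move=> w /=.
set ww := abs w.
pose z n := inf (abs (x (alpha n) - l)) ww.
change (oconv L natD z 0).
have z0 : forall n, 0 <=: z n by move=> n; apply: qinf_ge0; exact: qabs_ge0.
have zw : forall n, z n <=: ww by move=> n; exact: qinf2.
have zW : forall n, H n n (z n).
  move=> n; have := (normal_solid hW n) => hs; apply: (hs _ _ (yW n)).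
  by rewrite (qabs_id (z0 n)); exact: qinf1.
have zdisj : forall t, (forall n, H n n t) -> 0 <=: t -> forall n, inf (z n) t = 0.
  move=> t Ht t0 n.
  have := hVd (alpha n) t (hWN t Ht n); rewrite (qabs_id t0) => h.
  exact: (qinf_le0 (z0 n) t0 (qinf1 _ _) h).
pose T y := exists n, forall k, (n <= k)%N -> z k <=: y.
have Tinf : forall a b, T a -> T b -> T (inf a b).
  move=> a b [na ha] [nb hb]; exists (maxn na nb) => k hk.
  apply: qinfg; [apply: ha|apply: hb]; apply: leq_trans hk; rewrite ?leq_maxl ?leq_maxr //.
have Tww : T ww by exists 0%N; move=> k0 _; exact: zw.
have KEY : forall p, 0 <=: p -> (forall y, T y -> p <=: y) -> p <=: 0.
  move=> p p0 hp.
  have pN : forall n, H n n p.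
    move=> n.
    pose S m := \sum_(i < m) z (n.+2 + i)%N.
    have S0 : forall m, 0 <=: S m by move=> m; exact: (sum_ge0 L (fun i => z (n.+2 + i)%N) (fun j => z0 _) m).
    have SW : forall m, H n.+1 n.+1 (S m).
      by move=> m; apply: (sum_in (W:=fun j => H j j) z hW zW m n.+1).
    pose g m := sup (p - S m) 0.
    have g0 : forall m, 0 <=: g m by move=> m; exact: qsub2.
    have gdec : forall m m', (m <= m')%N -> g m' <=: g m.
      move=> m m' hm; apply: qsup_le; last exact: qlrefl.
      by apply: qlsubDl; exact: (sumS_le (fun i => z (n.+2 + i)%N) (fun j => z0 _) m m' hm).
    have hog : oconv L natD g 0.
      exists nat, natD, g; split.
        split; first exact: gdec.
        split; first by move=> _ [m _ <-]; exact: g0.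
        move=> v hv; set q := sup v 0.
        have hq : forall m, q <=: g m.
          by move=> m; apply: qsul; [apply: hv; exists m|exact: g0].
        have hT : forall j, T (ww - q *+ j).
          elim=> [|j [n' hn']]; first by rewrite mulr0n subr0.
          exists (maxn n' n.+2) => k hk.
          have hk1 : (n' <= k)%N by apply: leq_trans hk; rewrite leq_maxl.
          have hk2 : (n.+2 <= k)%N by apply: leq_trans hk; rewrite leq_maxr.
          set y' := ww - q *+ j.
          have zy : z k <=: y' := hn' k hk1.
          have py : p <=: y' by apply: hp; exists n'.
          have zS : z k <=: S (k - n.+2).+1.
            have := sum_ge L (fun i => z (n.+2 + i)%N) (fun j => z0 _) _ _ (ltnSn (k - n.+2)).
            by rewrite /= subnKC.
          have hq' : q <=: y' - z k.
            apply: qltr (hq (k - n.+2).+1) _.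
            rewrite /g.
            apply: qsul; last exact: qlsub0.
            apply: qltr (qlsubDl zS) _.
            by apply: qlD2r.
          rewrite mulrSr opprD addrA; exact: qswap_sub hq'.
        have : q <=: 0.
          apply: (arch_tail ww q p Harch p0) => j.
          by have [n' hn'] := hT j; apply: hp; exists n'.
        by apply: qltr; exact: qsub1.
      move=> b0; exists b0 => a hab /=.
      by rewrite subr0 (qabs_id (g0 a)); apply: gdec.
    have [m0 hm0] := Hol.2 _ _ _ _ hog _ (hWn n.+1 n.+1).
    have gW := hm0 m0 (leqnn m0).
    have hpS : p <=: g m0 + S m0 by apply: qlsubr'; exact: qsub1.
    apply: (normal_solid hW n (g m0 + S m0)); first exact: (normal_add hW).
    rewrite (qabs_id p0) qabs_id //.
    by have := qlD (g0 m0) (S0 m0); rewrite addr0.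
  have hT : forall j, T (ww - p *+ j).
    elim=> [|j [n' hn']]; first by rewrite mulr0n subr0.
    exists n' => k hk.
    have zy := hn' k hk.
    have py : p <=: ww - p *+ j by apply: hp; exists n'.
    rewrite mulrSr opprD addrA; apply: qlsubl.
    exact: qdisj_le (zdisj p pN p0 k) zy py.
  by apply: (arch_tail ww p p Harch p0) => j; apply: hp; exact: hT.
pose DJ := @downdir T (exist T ww Tww) Tinf.
exists {y | T y}, DJ, (fun b => proj1_sig b); split.
  split; first by move=> b b' h.
  split.
    move=> _ [[y [n hn]] _ <-] /=.
    exact: qltr (z0 n) (hn n (leqnn n)).
  move=> v hv; set p := sup v 0.
  have : p <=: 0.
    apply: KEY; first exact: qsub2.
    move=> y Ty; apply: qsul; last first.
      by case: Ty => n hn; exact: qltr (z0 n) (hn n (leqnn n)).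
    by apply: hv; exists (exist T y Ty).
  by apply: qltr; exact: qsub1.
move=> [y [n hn]]; exists n => k hk /=.
by rewrite subr0 (qabs_id (z0 k)); apply: hn.
Qed.

End B.

Unset Implicit Arguments.

Theorem theorem5p6 (R : realType) (E : topologicalLmodType R)
  (L : vector_lattice E) (HArch : archimedean_vl L)
  (Hhaus : hausdorff_space E) (Hol : o_lebesgue L) :
  let P1 := carrier L = [set: E] in
  let P2 := countable_sup_property L in
  let P3 := forall (I : Type) (D : dirset I) (x : I -> E) (l : E),
      tconv D x l ->
      exists alpha : nat -> I, embedded_indices D alpha /\ uoconv L natD (x \o alpha) l in
  let P4 := forall (I : Type) (D : dirset I) (x : I -> E) (l : E),
      increasing_pos_net L D x -> tconv D x l ->
      exists alpha : nat -> I, embedded_indices D alpha /\ uoconv L natD (x \o alpha) l in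
  [/\ P1 <-> P2, P2 <-> P3 & P3 <-> P4].
Proof.
move=> P1 P2 P3 P4.
have h13 : P1 -> P3 := fun h => @B13 _ _ L HArch Hol h.
have h34 : P3 -> P4 := fun h3 I D x l _ htc => h3 I D x l htc.
have h42 : P4 -> P2 := fun h4 => @C42 _ _ L Hol h4.
have h21 : P2 -> P1 := fun h2 => @A21 _ _ L HArch Hol Hhaus h2.
split; split; auto.
Qed.
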